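(* Let $G$ be a complete edge-colored permutation graph. Then for each strong module $M$ of $G$, the quotient graph $G[M]/\mathbb{P}_{\max}(M)$ is a complete edge-colored permutation graph.
   Context: A complete $k$-edge-colored graph $G=(V,E_1,\dots,E_k)$ is the complete graph on a finite set $V$ whose edges are partitioned into $k$ nonempty color classes $E_i$ (the one-vertex graph also counts); $G_{|i}=(V,E_i)$. A labeling is a bijection $\ell:V\to\{1,\dots,|V|\}$. A graph $(V,E)$ with labeling $\ell$ is a simple permutation graph of a permutation $\pi$ if for all $u,v$ with $\ell(u)>\ell(v)$: $\{u,v\}\in E$ iff $\pi^{-1}(\ell(u))<\pi^{-1}(\ell(v))$. $G$ is a complete edge-colored permutation graph if there exist a labeling $\ell$ and permutations $\pi_1,\dots,\pi_k$ with $(G_{|i},\ell)$ a simple permutation graph of $\pi_i$ for all $i$. A module is a set $M\subseteq V$ such that for every $v\notin M$ all edges $\{u,v\}$, $u\in M$, have the same color; a strong module is a nonempty module not overlapping (i.e., comparable by inclusion or disjoint with) any other module. For a strong module $M$ with $|M|\ge2$, $\mathbb{P}_{\max}(M)$ is the set of inclusion-maximal strong modules properly contained in $M$ (a partition of $M$), and $G[M]/\mathbb{P}_{\max}(M)$ is the complete graph on $\mathbb{P}_{\max}(M)$ where $\{M_a,M_b\}$ has the common color of all edges between $M_a$ and $M_b$; for $|M|=1$ the quotient is the one-vertex graph. *)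

(* Defs.v *)
From mathcomp Require Import all_boot all_fingroup.
Set Implicit Arguments. Unset Strict Implicit. Unset Printing Implicit Defensive.

(* A complete k-edge-colored graph on a finite vertex type V is given by a
   colouring col : V -> V -> 'I_k of the pairs; only values on pairs u != v
   matter, and they must be symmetric. *)

Section Defs.
Variable V : finType.
Variable k : nat.

Definition complete_edge_colored (col : V -> V -> 'I_k) : Prop :=
  [/\ 0 < #|V|,
      (forall u v : V, u != v -> col u v = col v u) &
      (#|V| = 1 \/ forall i : 'I_k, exists u v : V, u != v /\ col u v = i)].

End Defs.

Section Perm.
Variable V : finType.
Variable K : eqType.
Definition simple_perm_graph (E : rel V) (l : V -> 'I_#|V|)
    (pi : {perm 'I_#|V|}) : Prop :=
  forall u v : V, l v < l u -> E u v = ((pi^-1)%g (l u) < (pi^-1)%g (l v)).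

Definition cec_perm_graph (col : V -> V -> K) : Prop :=
  exists l : V -> 'I_#|V|, bijective l /\
    forall i : K, exists pi : {perm 'I_#|V|},
      simple_perm_graph (fun u v => col u v == i) l pi.

End Perm.

Section Mod.
Variable V : finType.
Variable k : nat.
Definition is_module (col : V -> V -> 'I_k) (M : {set V}) : bool :=
  [forall u in M, forall w in M, forall v in ~: M, col u v == col w v].

Definition strong_module (col : V -> V -> 'I_k) (M : {set V}) : bool :=
  [&& M != set0, is_module col M &
      [forall M' : {set V}, is_module col M' ==>
         [|| M \subset M', M' \subset M | [disjoint M & M']]]].

Definition Pmax (col : V -> V -> 'I_k) (M : {set V}) : {set {set V}} :=
  [set M' : {set V} | [&& strong_module col M', M' \proper M &
     [forall M'' : {set V}, (strong_module col M'' && (M' \proper M''))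
                              ==> ~~ (M'' \proper M)]]].

Definition qparts (col : V -> V -> 'I_k) (M : {set V}) : {set {set V}} :=
  if #|M| <= 1 then [set M] else Pmax col M.

Definition qvert (col : V -> V -> 'I_k) (M : {set V}) : finType :=
  {X : {set V} | X \in qparts col M}.

(* colour of {Ma, Mb}: the common colour of the edges between Ma and Mb,
   evaluated on chosen representatives.  The option is only there to make
   the function total: parts are nonempty, so None never occurs. *)
Definition qcol (col : V -> V -> 'I_k) (M : {set V})
    (A B : qvert col M) : option 'I_k :=
  match [pick x in val A], [pick y in val B] with
  | Some x, Some y => Some (col x y)
  | _, _ => None
  end.

End Mod.

(* Main.v *)
Require Import Defs.
From mathcomp Require Import all_boot all_fingroup.
Set Implicit Arguments. Unset Strict Implicit. Unset Printing Implicit Defensive.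

Section Rank.
Variable W : finType.
Variable g : W -> nat.

Lemma rank_proof (u : W) : #|[set w | g w < g u]| < #|W|.
Proof.
rewrite -cardsT; apply: proper_card; rewrite properT.
apply/eqP => E. have : u \in [set w | g w < g u] by rewrite E inE.
by rewrite inE ltnn.
Qed.

Definition rank (u : W) : 'I_#|W| := Ordinal (rank_proof u).

Lemma rankE u : nat_of_ord (rank u) = #|[set w | g w < g u]|.
Proof. by []. Qed.

Lemma rank_lt u v : (rank u < rank v) = (g u < g v).
Proof.
rewrite !rankE; case: (ltnP (g u) (g v)) => H.
  apply: proper_card; apply/properP; split.
    apply/subsetP => w; rewrite !inE => Hw; exact: ltn_trans Hw H.
  by exists u; rewrite !inE ?ltnn.
apply/negbTE; rewrite -leqNgt; apply: subset_leq_card.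
apply/subsetP => w; rewrite !inE => Hw; exact: leq_trans Hw H.
Qed.

Lemma rank_inj : injective g -> injective rank.
Proof.
move=> gi u v E; apply: gi; apply/eqP.
case: (ltngtP (g u) (g v)) => // H.
  by move: H; rewrite -rank_lt E ltnn.
by move: H; rewrite -rank_lt E ltnn.
Qed.
End Rank.

Lemma induced_cec (V W : finType) (K : eqType) (col : V -> V -> K)
  (f : W -> V) (colW : W -> W -> option K) :
  injective f -> (forall u v, colW u v = Some (col (f u) (f v))) ->
  cec_perm_graph col -> cec_perm_graph colW.
Proof.
move=> fi Hc [l [lb Hl]].
have li := bij_inj lb.
have gi : injective (fun u => nat_of_ord (l (f u))).
  by move=> u v /val_inj /li /fi.
set lW := rank (fun u => nat_of_ord (l (f u))).
have lWi : injective lW by exact: rank_inj.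
have lWb : bijective lW by apply: (inj_card_bij lWi); rewrite card_ord.
case: lWb => lWinv lWK lWKinv.
exists lW; split; first by exists lWinv.
case=> [i|]; last first.
  exists 1%g => u v Hlt; rewrite Hc invg1 !perm1 /=.
  by apply/esym/negbTE; rewrite -leqNgt ltnW.
case: (Hl i) => p Hp.
set h := fun u => nat_of_ord ((p^-1)%g (l (f u))).
have hi : injective h.
  by move=> u v /val_inj /perm_inj /li /fi.
have si : injective (fun j => rank h (lWinv j)).
  move=> a b /(rank_inj hi) E; by rewrite -(lWKinv a) -(lWKinv b) E.
exists ((perm si)^-1)%g => u v Hlt.
rewrite invgK !permE !lWK rank_lt Hc.
have Hlt' : l (f v) < l (f u) by move: Hlt; rewrite /lW rank_lt.
have -> : (Some (col (f u) (f v)) == Some i) = (col (f u) (f v) == i) by [].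
exact: (Hp _ _ Hlt').
Qed.

Theorem proposition4p4 (V : finType) (k : nat) (col : V -> V -> 'I_k) :
  complete_edge_colored col ->
  cec_perm_graph col ->
  forall M : {set V}, strong_module col M ->
    cec_perm_graph (@qcol V k col M).
Proof.
move=> _ Hcec M HM.
have HM' := HM; case/and3P: HM' => Mne _ _.
case/set0Pn: Mne => x0 Hx0.
have qS : forall X, X \in qparts col M -> strong_module col X.
  move=> X; rewrite /qparts; case: ifP => _.
    by rewrite inE => /eqP ->.
  by rewrite inE => /and3P [].
have strongA : forall A : qvert col M, strong_module col (val A).
  move=> A; apply: qS; exact: (proj2_sig A).
have neA : forall A : qvert col M, exists x, x \in val A.
  move=> A; have := strongA A; case/and3P => /set0Pn [x Hx] _ _; by exists x.
have qU : forall X Y x, X \in qparts col M -> Y \in qparts col M ->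
    x \in X -> x \in Y -> X = Y.
  move=> X Y x; rewrite /qparts; case: ifP => _.
    by rewrite !inE => /eqP -> /eqP ->.
  have key : forall X Y : {set V}, X \in Pmax col M -> Y \in Pmax col M ->
      X \subset Y -> X = Y.
    move=> X' Y'; rewrite !inE => /and3P [_ _ /forallP HX] /and3P [sY pY _] XY.
    apply/eqP; apply: contraT => nXY.
    have pXY : X' \proper Y' by rewrite properEneq nXY XY.
    by move: (HX Y'); rewrite sY pXY pY.
  move=> HA HB fA fB.
  have sX : strong_module col X by move: HA; rewrite inE => /and3P [].
  have sY : strong_module col Y by move: HB; rewrite inE => /and3P [].
  case/and3P: sY => _ mB _.
  case/and3P: sX => _ _ /forallP /(_ Y); rewrite mB /=.
  case/or3P => [S|S|D].
  + exact: key.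
  + exact/esym/key.
  + by move: D => /disjoint_setI0 /setP /(_ x); rewrite inE fA fB inE.
pose f (A : qvert col M) := odflt x0 [pick x in val A].
have fin : forall A : qvert col M, [pick x in val A] = Some (f A) /\ f A \in val A.
  move=> A; rewrite /f; case: pickP => [x Hx|H] //.
  by case: (neA A) => x Hx; rewrite H in Hx.
apply: (@induced_cec _ _ _ col f).
- move=> A B E.
  have [_ fA] := fin A; have [_ fB] := fin B.
  apply: (@val_inj _ _ {X : {set V} | X \in qparts col M}).
  apply: (qU _ _ (f A) (proj2_sig A) (proj2_sig B) fA); by rewrite E.
- move=> A B; rewrite /qcol (proj1 (fin A)) (proj1 (fin B)) //.
- exact: Hcec.
Qed.
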